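(* Let $S$ be an infinite set and $\mathcal{F}\subseteq 2^S$ countable, nontrivial, and closed under finite unions and finite intersections. Let $\mathbf{A}=(A_1,\dots,A_k)$ be a classification problem with $k\ge 2$, and let $C\subseteq S\setminus(A_1\cup\dots\cup A_k)$ be $\mathcal{F}$-cohesive with $(C,A_i)\notin\mathit{class}_2(\mathcal{F})$ for $1\le i\le k$. Then there exists $\mathbf{B}\le\mathbf{A}$ with $|\mathbf{B}|=k$ and $\mathbf{B}\in\mathit{core}_k(\mathcal{F})$.
   Context: $\mathcal{F}$ is nontrivial if $\emptyset,S\in\mathcal{F}$ and for all $Q\in\mathcal{F}$ and finite $E\subseteq S$ both $Q\cup E\in\mathcal{F}$ and $Q\setminus E\in\mathcal{F}$. A classification problem is a vector $(A_1,\dots,A_k)$, $k\ge1$, of pairwise disjoint infinite subsets of $S$, of length $k$. For vectors $\mathbf{B}=(B_1,\dots,B_m)$, $\mathbf{Q}=(Q_1,\dots,Q_k)$, $\mathbf{B}\le\mathbf{Q}$ means $1\le m\le k$ and there is an injective $\sigma:\{1,\dots,m\}\to\{1,\dots,k\}$ with $B_i\subseteq Q_{\sigma(i)}$. An $\mathcal{F}$-partition is a vector of pairwise disjoint members of $\mathcal{F}$ whose union is $S$. $\mathit{class}_k(\mathcal{F})$: classification problems of length $k$ with $\mathbf{A}\le\mathbf{Q}$ for some $\mathcal{F}$-partition $\mathbf{Q}$ of length $k$ (for $k=2$, $(C,A_i)\in\mathit{class}_2(\mathcal{F})$ requires in particular $C$ infinite). For $k>1$, $\mathit{core}_k(\mathcal{F})$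 is the set of classification problems $\mathbf{A}$ of length $k$ (in particular with infinite, pairwise disjoint components) such that every classification problem $\mathbf{A}'\le\mathbf{A}$ with $|\mathbf{A}'|>1$ satisfies $\mathbf{A}'\notin\mathit{class}_{|\mathbf{A}'|}(\mathcal{F})$. A set $A\subseteq S$ is $\mathcal{F}$-cohesive if $A$ is infinite and for every $Q$ with $Q\in\mathcal{F}$ and $S\setminus Q\in\mathcal{F}$, either $A\cap Q$ or $A\setminus Q$ is finite. *)

(* Defs.v *)
From mathcomp Require Import all_boot.
From mathcomp Require Import boolp classical_sets cardinality.
Set Implicit Arguments. Unset Strict Implicit. Unset Printing Implicit Defensive.
Local Open Scope classical_set_scope.

(* The ambient set S is the whole carrier type T; subsets of S are [set T].
   Vectors of length k are functions 'I_k -> set T (index i : 'I_k stands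
   for the paper's index i+1). *)

Section Defs.
Variable T : Type.

Definition nontrivial (F : set (set T)) : Prop :=
  F set0 /\ F setT /\
  (forall Q E, F Q -> finite_set E -> F (Q `|` E) /\ F (Q `\` E)).

Definition closed_fin_union_inter (F : set (set T)) : Prop :=
  forall Q R, F Q -> F R -> F (Q `|` R) /\ F (Q `&` R).

Definition class_problem (k : nat) (A : 'I_k -> set T) : Prop :=
  (1 <= k)%N /\ (forall i, infinite_set (A i)) /\
  (forall i j, i != j -> A i `&` A j = set0).

Definition vle (m k : nat) (B : 'I_m -> set T) (Q : 'I_k -> set T) : Prop :=
  (1 <= m)%N /\ (m <= k)%N /\
  exists sigma : 'I_m -> 'I_k, injective sigma /\ forall i, B i `<=` Q (sigma i).

Definition F_partition (F : set (set T)) (k : nat) (Q : 'I_k -> set T) : Prop :=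
  (forall i, F (Q i)) /\ (forall i j, i != j -> Q i `&` Q j = set0) /\
  \bigcup_(i in [set: 'I_k]) Q i = setT.

Definition class_k (F : set (set T)) (k : nat) (A : 'I_k -> set T) : Prop :=
  class_problem A /\ exists Q : 'I_k -> set T, F_partition F Q /\ vle A Q.

Definition core_k (F : set (set T)) (k : nat) (A : 'I_k -> set T) : Prop :=
  class_problem A /\
  forall (m : nat) (A' : 'I_m -> set T),
    class_problem A' -> vle A' A -> (1 < m)%N -> ~ class_k F A'.

Definition F_cohesive (F : set (set T)) (A : set T) : Prop :=
  infinite_set A /\
  forall Q, F Q -> F (~` Q) -> finite_set (A `&` Q) \/ finite_set (A `\` Q).

Definition pair2 (C D : set T) : 'I_2 -> set T :=
  fun i => if val i == 0%N then C else D.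

End Defs.

(* Main.v *)
Require Import Defs.
From mathcomp Require Import all_boot.
From mathcomp Require Import finmap boolp classical_sets cardinality.
Local Open Scope classical_set_scope.

Lemma pair_class (T : Type) (F : set (set T)) (Q X Y : set T) :
  F Q -> F (~` Q) -> X `<=` Q -> Y `<=` ~` Q -> infinite_set X -> infinite_set Y ->
  class_k F (pair2 X Y).
Proof.
move=> FQ FQc XQ YQ iX iY.
have dis : X `&` Y = set0.
  by apply/seteqP; split => x // [/XQ ? /YQ].
split.
  split => //; split.
    by move=> [[|[|//]] ?] /=.
  move=> [[|[|//]] ?] [[|[|//]] ?] //= _; by rewrite setIC.
exists (pair2 Q (~` Q)); split.
  split; first by move=> [[|[|//]] ?] /=.
  split.
    move=> [[|[|//]] ?] [[|[|//]] ?] //= _; apply/seteqP; split => x // [].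
      by move=> a b; apply: b.
    by move=> a b; apply: a.
  apply/seteqP; split => x // _.
  have [Qx|nQx] := pselect (Q x).
    by exists (@Ordinal 2 0 isT).
  by exists (@Ordinal 2 1 isT).
split => //; split => //; exists id; split => //.
by move=> [[|[|//]] ?] /=.
Qed.
Lemma part_compl (T : Type) (F : set (set T)) (m : nat) (Q : 'I_m -> set T) :
  nontrivial F -> closed_fin_union_inter F -> F_partition F Q ->
  forall j, F (~` Q j).
Proof.
move=> [F0 _] cl [FQ [dQ cQ]] j.
have -> : ~` Q j = \big[setU/set0]_(t <- enum 'I_m | t != j) Q t.
  rewrite -bigcup_seq_cond; apply/seteqP; split => x /=.
    move=> nQ; have : [set: T] x by [].
    rewrite -cQ => -[l _ Qlx]; exists l => //=.
    rewrite mem_enum /=; apply/eqP => lj; by apply: nQ; rewrite -lj.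
  move=> [l /andP[_ lj] Qlx] Qjx.
  have : (Q l `&` Q j) x by [].
  by rewrite dQ.
apply: big_ind => //.
by move=> X Y FX FY; case: (cl X Y FX FY).
Qed.
Theorem theorem3p8 (T : Type) (F : set (set T)) (k : nat)
    (A : 'I_k -> set T) (C : set T) :
  infinite_set [set: T] ->
  countable F -> nontrivial F -> closed_fin_union_inter F ->
  class_problem A -> (2 <= k)%N ->
  C `<=` ~` (\bigcup_(i in [set: 'I_k]) A i) ->
  F_cohesive F C ->
  (forall i, ~ class_k F (pair2 C (A i))) ->
  exists B : 'I_k -> set T, vle B A /\ core_k F B.
Proof.
elim/Pchoice: T => T in F A C *.
move=> _ cF ntF clF [k1 [Ainf Adis]] k2 CA [Cinf Ccoh] nCl.
have [F0 [FT Ffin]] := ntF.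
pose G := fun Q : set T => F Q /\ F (~` Q) /\ finite_set (C `\` Q).
have Ginf : forall i Q, G Q -> infinite_set (A i `&` Q).
  move=> i Q [FQ [FQc finCQ]] finAQ.
  pose E := C `\` Q; pose E2 := A i `&` Q.
  pose Q' := (Q `|` E) `\` E2.
  have FQ' : F Q' := (Ffin _ _ (Ffin Q E FQ finCQ).1 finAQ).2.
  have FQ'c : F (~` Q').
    rewrite /Q' setDE setCI setCK setCU -setDE.
    exact: (Ffin _ _ (Ffin _ E FQc finCQ).2 finAQ).1.
  apply: (nCl i); apply: (@pair_class T F Q' C (A i) FQ' FQ'c) => //.

    move=> x Cx; split.
      by have [Qx|nQx] := pselect (Q x); [left|right].
    by move=> [Ax _]; apply: (CA x Cx); exists i.
  move=> x Ax [[Qx|[Cx _]] nE2]; first by apply: nE2.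
  by apply: (CA x Cx); exists i.
have [e [eG eS]] : exists e : nat -> set T, (forall n, G (e n)) /\
    (forall Q, G Q -> exists n, e n = Q).
  have GT : G setT.
    split=> //; split; first by rewrite setCT.
    by rewrite setDT; exact: finite_set0.
  move: cF => /countable_injP [f finj].
  exists (fun n => match pselect (exists Q, G Q /\ f Q = n) with
     left h => projT1 (cid h) | right _ => setT end); split.
    move=> n; case: pselect => [h|//]; by case: (cid h) => Q [].
  move=> Q GQ; exists (f Q); case: pselect => [h|[]]; last by exists Q.
  case: (cid h) => R [GR fR] /=; apply: finj => //; rewrite inE.
    exact: GR.1.
  exact: GQ.1.
pose P := fix P n := if n is n'.+1 then P n' `&` e n else e 0%N.
have PG : forall n, G (P n).
  elim => [|n [F1 [F2 F3]]] /=; first exact: eG.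
  have [F1' [F2' F3']] := eG n.+1.
  split; first exact: (clF _ _ F1 F1').2.
  split; first by rewrite setCI; exact: (clF _ _ F2 F2').1.
  by rewrite setDIr finite_setU.
have Pe : forall n, P n `<=` e n.
  by case => [|n] //= x [].
have Pdec : forall n m, (n <= m)%N -> P m `<=` P n.
  move=> n m; elim: m => [|m IH].
    by rewrite leqn0 => /eqP ->.
  rewrite leq_eqVlt => /orP [/eqP -> // | ].
  by rewrite ltnS => /IH h x [Px _]; exact: h.
have [E HE] : exists E : 'I_k * nat -> {fset T}, forall p,
    [set` E p] `<=` A p.1 `&` P p.2 /\ (p.2 <= #|` E p|)%N.
  have : forall p : 'I_k * nat, exists E : {fset T},
      [set` E] `<=` A p.1 `&` P p.2 /\ (p.2 <= #|` E|)%N.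
    move=> [i n]; have [E h1 h2] := infinite_set_fset n (Ginf i (P n) (PG n)).
    by exists E.
  by move/choice => [E HE]; exists E.
pose B := fun i => \bigcup_(n in [set: nat]) [set` E (i, n)].
have BA : forall i, B i `<=` A i.
  by move=> i x [n _ /((HE (i,n)).1) [Ax _]].
have Binf : forall i, infinite_set (B i).
  move=> i; apply/infinite_set_fsetP => n.
  exists (E (i,n)); last exact: (HE (i,n)).2.
  by move=> x Ex; exists n.
have BP : forall i n, finite_set (B i `\` P n).
  move=> i n.
  apply: (@sub_finite_set _ _ (\bigcup_(m in `I_n) [set` E (i,m)])); last first.
    by apply: bigcup_finite => [|m _]; [exact: finite_II | exact: finite_fset].
  move=> x [[m _ Ex] nPx]; exists m => //=.
  rewrite ltnNge; apply/negP => nm; apply: nPx; apply: (Pdec n m nm).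
  exact: ((HE (i,m)).1 x Ex).2.
have dich : forall Q, F Q -> F (~` Q) ->
   (forall i, finite_set (B i `\` Q)) \/ (forall i, finite_set (B i `&` Q)).
  move=> Q FQ FQc; case: (Ccoh Q FQ FQc) => [fin1|fin2].
    right => i.
    have GQc : G (~` Q).
      by split=> //; split; [rewrite setCK | rewrite setDE setCK].
    have [n en] := eS _ GQc.
    apply: (sub_finite_set _ (BP i n)) => x [Bx Qx]; split => // Px.
    by have := Pe n x Px; rewrite en; apply.
  left => i; have [n en] := eS Q (conj FQ (conj FQc fin2)).
  apply: (sub_finite_set _ (BP i n)) => x [Bx nQx]; split=> // Px.
  by apply: nQx; rewrite -en; exact: Pe.
exists B; split.
  split; [exact: k1 | split; [exact: leqnn | exists id; split => //]].
split.
  split; first exact: k1.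
  split; first exact: Binf.
  move=> i j ij; apply/seteqP; split=> x // [/BA Ai /BA Aj].
  have : (A i `&` A j) x by [].
  by rewrite Adis.
move=> m A' cpA' [m1 [mk [s [sinj sB]]]] m2 [_ [Q [Qpart [_ [_ [t [tinj tQ]]]]]]].
pose i0 : 'I_m := Ordinal (ltn_trans (ltnSn 0) m2).
pose i1 : 'I_m := Ordinal m2.
have [_ [A'inf _]] := cpA'.
have FR := Qpart.1 (t i0).
have FRc := @part_compl T F m Q ntF clF Qpart (t i0).
have dis : Q (t i1) `&` Q (t i0) = set0.
  apply: Qpart.2.1; apply/eqP => /tinj /(congr1 val) //.
case: (dich _ FR FRc) => [h|h].
  apply: (A'inf i1); apply: (sub_finite_set _ (h (s i1))) => x Ax.
  split; first exact: sB.
  move=> Rx; have : (Q (t i1) `&` Q (t i0)) x by split; [exact: tQ|].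
  by rewrite dis.
apply: (A'inf i0); apply: (sub_finite_set _ (h (s i0))) => x Ax.
by split; [exact: sB | exact: tQ].
Qed.
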